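(* $\mathbf{K4}^{\nabla\bullet}$ is strongly complete with respect to the class of transitive frames: for every set $\Gamma\cup\{\phi\}\subseteq\mathcal{L}(\nabla,\bullet)$, if for every Kripke model $\mathcal{M}$ with transitive accessibility relation and every state $s$, $\mathcal{M},s\vDash\Gamma$ implies $\mathcal{M},s\vDash\phi$, then $\Gamma\vdash_{\mathbf{K4}^{\nabla\bullet}}\phi$.
   Context: $\mathcal{L}(\nabla,\bullet)$: $\phi::=p\mid\neg\phi\mid\phi\land\phi\mid\nabla\phi\mid\bullet\phi$ over a nonempty set $\mathbf{P}$ of propositional variables; $\Delta\phi:=\neg\nabla\phi$, $\circ\phi:=\neg\bullet\phi$. Kripke models $\langle S,R,V\rangle$: $s\vDash\nabla\phi$ iff there are $t,u$ with $sRt$, $sRu$, $t\vDash\phi$, $u\nvDash\phi$; $s\vDash\bullet\phi$ iff $s\vDash\phi$ and there is $t$ with $sRt$, $t\nvDash\phi$. The Hilbert system $\mathbf{K}^{\nabla\bullet}$ has axioms: A0 all propositional tautologies; A1 $\bullet\phi\to\phi$; A2 $\nabla\phi\leftrightarrow\nabla\neg\phi$; A3 $\bullet(\psi\to\phi)\land\phi\to\bullet\phi$; A4 $\nabla(\phi\land\psi)\to\nabla\phi\vee\nabla\psi$; A5 $\bullet(\phi\land\psi)\to\bullet\phi\vee\bullet\psi$; A6 $\nabla\phi\to\bullet\phi\vee\bullet\neg\phi$; A7 $\bullet(\phi\to\psi)\land\bullet(\neg\phi\to\chi)\to\nabla\phi$; rules R1 $\phi/\Delta\phi$; R2 $\phi/\circ\phi$;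 R3 $\phi\leftrightarrow\psi/\Delta\phi\leftrightarrow\Delta\psi$; R4 $\phi\leftrightarrow\psi/\circ\phi\leftrightarrow\circ\psi$; MP. $\mathbf{K4}^{\nabla\bullet}$ adds the axiom schemas A4-1 $\Delta\phi\to\Delta\Delta\phi$; A4-2 $\Delta\phi\to\circ(\psi\to\Delta\phi)$; A4-3 $\bullet\psi_1\land\Delta\phi\land\circ(\neg\psi_1\to\phi)\to\Delta\circ(\neg\psi_2\to\phi)$; A4-4 $\bullet\psi_1\land\Delta\phi\land\circ(\neg\psi_1\to\phi)\to\circ(\neg\psi_1\to\circ(\neg\psi_2\to\phi))$. $\Gamma\vdash\phi$ means $\vdash(\gamma_1\land\dots\land\gamma_n)\to\phi$ for some finite subset of $\Gamma$. *)

(* Defs.v *)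
From Stdlib Require Import List.
Import ListNotations.
Set Implicit Arguments.

Section Lang.
Variable P : Type.

Inductive form : Type :=
| Var : P -> form
| Neg : form -> form
| And : form -> form -> form
| Nab : form -> form
| Bul : form -> form.

Definition Impl (a b : form) : form := Neg (And a (Neg b)).
Definition Or (a b : form) : form := Neg (And (Neg a) (Neg b)).
Definition Iff (a b : form) : form := And (Impl a b) (Impl b a).
Definition Del (a : form) : form := Neg (Nab a).
Definition Circ (a : form) : form := Neg (Bul a).

Fixpoint sat (S : Type) (R : S -> S -> Prop) (V : P -> S -> Prop) (s : S) (f : form) : Prop :=
  match f with
  | Var p => V p s
  | Neg a => ~ sat R V s a
  | And a b => sat R V s a /\ sat R V s b
  | Nab a => exists t u, R s t /\ R s u /\ sat R V t a /\ ~ sat R V u a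
  | Bul a => sat R V s a /\ exists t, R s t /\ ~ sat R V t a
  end.

(* Propositional tautologies: true under every boolean valuation that treats
   propositional variables and modal formulas (nabla a, bullet a) as atoms. *)
Fixpoint beval (v : form -> bool) (f : form) : bool :=
  match f with
  | Var _ => v f
  | Neg a => negb (beval v a)
  | And a b => andb (beval v a) (beval v b)
  | Nab _ => v f
  | Bul _ => v f
  end.

Definition tautology (f : form) : Prop := forall v : form -> bool, beval v f = true.

Inductive thmK4 : form -> Prop :=
| A0 : forall f, tautology f -> thmK4 f
| A1 : forall f, thmK4 (Impl (Bul f) f)
| A2 : forall f, thmK4 (Iff (Nab f) (Nab (Neg f)))
| A3 : forall f g, thmK4 (Impl (And (Bul (Impl g f)) f) (Bul f))
| A4 : forall f g, thmK4 (Impl (Nab (And f g)) (Or (Nab f) (Nab g)))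
| A5 : forall f g, thmK4 (Impl (Bul (And f g)) (Or (Bul f) (Bul g)))
| A6 : forall f, thmK4 (Impl (Nab f) (Or (Bul f) (Bul (Neg f))))
| A7 : forall f g h,
    thmK4 (Impl (And (Bul (Impl f g)) (Bul (Impl (Neg f) h))) (Nab f))
| A4_1 : forall f, thmK4 (Impl (Del f) (Del (Del f)))
| A4_2 : forall f g, thmK4 (Impl (Del f) (Circ (Impl g (Del f))))
| A4_3 : forall f g1 g2,
    thmK4 (Impl (And (And (Bul g1) (Del f)) (Circ (Impl (Neg g1) f)))
                (Del (Circ (Impl (Neg g2) f))))
| A4_4 : forall f g1 g2,
    thmK4 (Impl (And (And (Bul g1) (Del f)) (Circ (Impl (Neg g1) f)))
                (Circ (Impl (Neg g1) (Circ (Impl (Neg g2) f)))))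
| R1 : forall f, thmK4 f -> thmK4 (Del f)
| R2 : forall f, thmK4 f -> thmK4 (Circ f)
| R3 : forall f g, thmK4 (Iff f g) -> thmK4 (Iff (Del f) (Del g))
| R4 : forall f g, thmK4 (Iff f g) -> thmK4 (Iff (Circ f) (Circ g))
| MP : forall f g, thmK4 (Impl f g) -> thmK4 f -> thmK4 g.

(* Gamma |- phi : |- (g1 /\ ... /\ gn) -> phi for some finite subset of Gamma;
   the case n = 0 is read as |- phi. Conjunction is left-associated. *)
Definition derivesK4 (Gamma : form -> Prop) (phi : form) : Prop :=
  thmK4 phi \/
  exists (g : form) (gs : list form),
    Gamma g /\ (forall x, In x gs -> Gamma x) /\
    thmK4 (Impl (fold_left And gs g) phi).

End Lang.

Definition transitive_rel (S : Type) (R : S -> S -> Prop) : Prop :=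
  forall x y z, R x y -> R y z -> R x z.

(* Main.v *)
Require Import Defs.
From Stdlib Require Import List Classical.
From mathcomp Require classical_sets.
Import ListNotations.

Section K.
Variable P : Type.
Variable p0 : P.
Notation F := (form P).
Notation thm := (@thmK4 P).

Ltac bv := let v := fresh "v" in intro v; unfold Impl, Or, Iff, Del, Circ in *; cbn;
  repeat match goal with
  | |- context [beval v ?x] => destruct (beval v x)
  | |- context [v ?x] => destruct (v x)
  end; cbn; repeat (let H := fresh in intro H; try discriminate H); reflexivity.

Lemma pc1 (a b : F) : (forall v, beval v a = true -> beval v b = true) -> thm a -> thm b.
Proof.
  intros H Ha. apply (MP (f:=a)); auto. apply A0. intro v. unfold Impl; cbn.
  specialize (H v). destruct (beval v a), (beval v b); auto.
Qed.

Lemma pc2 (a c b : F) : (forall v, beval v a = true -> beval v c = true -> beval v b = true) -> thm a -> thm c -> thm b.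
Proof.
  intros H Ha Hc. apply (MP (f:=c)); auto. apply (MP (f:=a)); auto. apply A0. intro v. unfold Impl; cbn.
  specialize (H v). destruct (beval v a), (beval v b), (beval v c); auto.
Qed.

Definition top : F := Impl (Var p0) (Var p0).
Definition conj (l : list F) : F := fold_right (@And P) top l.

Lemma beval_conj v l : beval v (conj l) = forallb (beval v) l.
Proof.
  induction l. cbn. destruct (v (Var p0)); reflexivity.
  change (conj (a::l)) with (And a (conj l)). cbn [beval forallb]. rewrite IHl; reflexivity.
Qed.

Lemma beval_foldl v gs g : beval v (fold_left (@And P) gs g) = andb (beval v g) (forallb (beval v) gs).
Proof.
  revert g; induction gs; intro g; cbn. destruct (beval v g); auto.
  rewrite IHgs; cbn. destruct (beval v g), (beval v a), (forallb (beval v) gs); auto.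
Qed.

Definition incons (X : F -> Prop) := exists l, (forall x, In x l -> X x) /\ thm (Neg (conj l)).
Definition mcs (M : F -> Prop) := ~ incons M /\ forall f, M f \/ M (Neg f).

Lemma split_list (X : F -> Prop) a l : (forall x, In x l -> X x \/ x = a) ->
  exists l', (forall x, In x l' -> X x) /\
   forall v, forallb (beval v) l' = true -> beval v a = true -> forallb (beval v) l = true.
Proof.
  induction l; intro H.
  - exists []. split. intros x []. intros; reflexivity.
  - destruct IHl as [l' [H1 H2]]. intros; apply H; right; auto.
    destruct (H a0 (or_introl eq_refl)) as [Ha|Ha].
    + exists (a0 :: l'). split. intros x [<-|Hx]; auto.
      intros v; cbn. intros E Eb. destruct (beval v a0); [|discriminate]. cbn in *. auto.
    + subst a0. exists l'. split; auto. intros v E Eb; cbn. rewrite Eb; cbn; auto.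
Qed.

Lemma incons_add (X : F -> Prop) a : incons (fun x => X x \/ x = a) ->
  exists l', (forall x, In x l' -> X x) /\ thm (Impl (conj l') (Neg a)).
Proof.
  intros [l [Hl Hn]]. destruct (split_list X a l Hl) as [l' [H1 H2]].
  exists l'. split; auto. revert Hn. apply pc1. intros v. unfold Impl; cbn.
  rewrite !beval_conj. specialize (H2 v). destruct (forallb (beval v) l'), (beval v a), (forallb (beval v) l); cbn; auto.
Qed.

Section MCS.
Variable M : F -> Prop.
Hypothesis HM : mcs M.

Lemma mcs_cl l b : (forall x, In x l -> M x) ->
  (forall v, forallb (beval v) l = true -> beval v b = true) -> M b.
Proof.
  intros Hl Hb. destruct (proj2 HM b) as [H|H]; auto. exfalso. apply (proj1 HM).
  exists (Neg b :: l). split. intros x [<-|Hx]; auto.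
  apply A0. intro v. change (conj (Neg b :: l)) with (And (Neg b) (conj l)). cbn.
  rewrite beval_conj. specialize (Hb v). destruct (forallb (beval v) l), (beval v b); cbn; auto.
Qed.

Lemma mcs_thm a : thm a -> M a.
Proof.
  intro H. destruct (proj2 HM a) as [H1|H1]; auto. exfalso. apply (proj1 HM).
  exists [Neg a]. split. intros x [<-|[]]; auto.
  revert H. apply pc1. intro v. change (conj [Neg a]) with (And (Neg a) top).
  unfold top, Impl; cbn. destruct (beval v a), (v (Var p0)); auto.
Qed.

Lemma mcs_negE a : M (Neg a) -> ~ M a.
Proof.
  intros H1 H2. apply (proj1 HM). exists [a; Neg a]. split. intros x [<-|[<-|[]]]; auto.
  apply A0. intro v. change (conj [a; Neg a]) with (And a (And (Neg a) top)). cbn.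
  destruct (beval v a); auto.
Qed.

Lemma mcs_negI a : ~ M a -> M (Neg a).
Proof. intro H. destruct (proj2 HM a); tauto. Qed.

Lemma mcs_neg a : M (Neg a) <-> ~ M a.
Proof. split. apply mcs_negE. apply mcs_negI. Qed.

Lemma mcs_mp a b : thm (Impl a b) -> M a -> M b.
Proof.
  intros H Ha. apply (mcs_cl [Impl a b; a]). intros x [<-|[<-|[]]]; auto. apply mcs_thm; auto.
  intro v; unfold Impl; cbn. destruct (beval v a), (beval v b); auto.
Qed.

Lemma mcs_1 a b : (forall v, beval v a = true -> beval v b = true) -> M a -> M b.
Proof.
  intros H Ha. apply (mcs_cl [a]). intros x [<-|[]]; auto.
  intro v; cbn. specialize (H v). destruct (beval v a); auto.
Qed.

Lemma mcs_2 a c b : (forall v, beval v a = true -> beval v c = true -> beval v b = true) -> M a -> M c -> M b.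
Proof.
  intros H Ha Hc. apply (mcs_cl [a; c]). intros x [<-|[<-|[]]]; auto.
  intro v; cbn. specialize (H v). destruct (beval v a), (beval v c); auto.
Qed.

Lemma mcs_and a b : M (And a b) <-> M a /\ M b.
Proof.
  split. intro H; split; revert H; apply mcs_1; intro v; cbn; destruct (beval v a), (beval v b); auto.
  intros [H1 H2]; revert H1 H2; apply mcs_2; intro v; cbn; destruct (beval v a), (beval v b); auto.
Qed.

Lemma mcs_ax2 a c b : thm (Impl (And a c) b) -> M a -> M c -> M b.
Proof. intros H Ha Hc. apply (mcs_mp _ _ H). apply mcs_and; auto. Qed.

Lemma mcs_or a b : M (Or a b) -> M a \/ M b.
Proof.
  intro H. destruct (classic (M a)); auto. right. apply mcs_negI in H0.
  revert H0 H. apply mcs_2. intro v; unfold Or; cbn. destruct (beval v a), (beval v b); auto.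
Qed.

Lemma mcs_iff a b : thm (Iff a b) -> M a -> M b.
Proof.
  intro H. apply mcs_mp. revert H. apply pc1. intro v. unfold Iff, Impl; cbn.
  destruct (beval v a), (beval v b); auto.
Qed.

Lemma mcs_iffr a b : thm (Iff a b) -> M b -> M a.
Proof.
  intro H. apply mcs_mp. revert H. apply pc1. intro v. unfold Iff, Impl; cbn.
  destruct (beval v a), (beval v b); auto.
Qed.

Lemma bul_eq x y : thm (Iff x y) -> M (Bul x) -> M (Bul y).
Proof.
  intros H Hx. apply R4 in H. apply mcs_thm in H. revert H Hx. apply mcs_2. bv.
Qed.

Lemma nab_eq x y : thm (Iff x y) -> M (Nab x) -> M (Nab y).
Proof.
  intros H Hx. apply R3 in H. apply mcs_thm in H. revert H Hx. apply mcs_2. bv.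
Qed.

End MCS.

Lemma incons_mono (X Y : F -> Prop) : (forall x, X x -> Y x) -> incons X -> incons Y.
Proof. intros H [l [Hl Hn]]. exists l; split; auto. Qed.

Lemma lindenbaum (X : F -> Prop) : ~ incons X -> exists M, mcs M /\ forall x, X x -> M x.
Proof.
  intro HX.
  destruct (classical_sets.Zorn_bigcup (T:=F) (P:=fun (A : classical_sets.set F) => ~ incons (fun x => X x \/ A x))) as [A [HA Hmax]].
  - intros Fm HF Htot [l [Hl Hn]].
    assert (G : (forall x, In x l -> X x) \/ exists Y, Fm Y /\ forall x, In x l -> X x \/ Y x).
    { clear Hn. induction l as [|a l IH].
      - left. intros x [].
      - destruct IH as [IH|[Y [FY HY]]]. intros; apply Hl; right; auto.
        + destruct (Hl a (or_introl eq_refl)) as [Ha|[Y FY HY]].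
          * left. intros x [<-|Hx]; auto.
          * right. exists Y. split; auto. intros x [<-|Hx]; auto.
        + right. destruct (Hl a (or_introl eq_refl)) as [Ha|[Z FZ HZ]].
          * exists Y. split; auto. intros x [<-|Hx]; auto.
          * destruct (Htot Y Z FY FZ) as [S|S].
            -- exists Z. split; auto. intros x [<-|Hx]; auto. destruct (HY x Hx); auto.
            -- exists Y. split; auto. intros x [<-|Hx]; auto. }
    destruct G as [G|[Y [FY HY]]].
    + apply HX. exists l; auto.
    + apply (HF Y FY). exists l; auto.
  - exists (fun x => X x \/ A x). split; [|auto].
    assert (Hadd : forall f, ~ incons (fun x => (X x \/ A x) \/ x = f) -> X f \/ A f).
    { intros f H. destruct (classic (A f)); auto. exfalso.
      apply (Hmax (fun x => A x \/ x = f)).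
      - split. intros t Ht; auto. intro S. apply H0. apply S. auto.
      - intro Hi. apply H. revert Hi. apply incons_mono. intros x [Hx|[Hx|Hx]]; auto. }
    split; auto. intro f.
    destruct (classic (incons (fun x => (X x \/ A x) \/ x = f))) as [H1|H1]; [|left; apply Hadd; auto].
    destruct (classic (incons (fun x => (X x \/ A x) \/ x = Neg f))) as [H2|H2]; [|right; apply Hadd; auto].
    exfalso. apply incons_add in H1. apply incons_add in H2.
    destruct H1 as [l1 [L1 T1]]. destruct H2 as [l2 [L2 T2]].
    apply HA. exists (l1 ++ l2). split. intros x Hx; apply in_app_or in Hx; destruct Hx; auto.
    revert T1 T2. apply pc2. intro v. unfold Impl; cbn. rewrite !beval_conj, forallb_app.
    destruct (forallb (beval v) l1), (forallb (beval v) l2), (beval v f); auto.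
Qed.

Definition box (M : F -> Prop) (ps f : F) := M (Del f) /\ M (Circ (Impl (Neg ps) f)).
Definition BB (M : F -> Prop) (f : F) :=
  (forall ps, M (Bul ps) -> box M ps f) /\ ((forall ps, ~ M (Bul ps)) -> M f).

Section Modal.
Variable M : F -> Prop.
Hypothesis HM : mcs M.

Lemma bul_T a : M (Bul a) -> M a.
Proof. apply mcs_mp; auto. apply A1. Qed.

Lemma circ_neg a : M (Circ a) <-> ~ M (Bul a).
Proof. unfold Circ. apply mcs_neg; auto. Qed.
Lemma del_neg a : M (Del a) <-> ~ M (Nab a).
Proof. unfold Del. apply mcs_neg; auto. Qed.

Lemma L_dual ps b : M (Bul ps) -> M (Circ (Impl (Neg ps) b)) -> M (Bul (Impl b ps)).
Proof.
  intros H1 H2. apply circ_neg in H2.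
  assert (H3 : M (Bul (And (Impl (Neg ps) b) (Impl b ps)))).
  { revert H1. apply bul_eq; auto. apply A0. bv. }
  apply (mcs_mp _ HM _ _ (A5 _ _)) in H3. apply mcs_or in H3; auto. tauto.
Qed.

Lemma L_indep ps1 ps2 b : M (Bul ps1) -> M (Bul ps2) -> box M ps1 b -> box M ps2 b.
Proof.
  intros H1 H2 [D C]. split; auto. apply circ_neg. intro H3.
  assert (H4 : M (Bul (Impl (Neg b) ps2))). { revert H3. apply bul_eq; auto. apply A0. bv. }
  pose proof (L_dual _ _ H1 C) as H5.
  pose proof (mcs_ax2 _ HM _ _ _ (A7 b ps1 ps2) H5 H4).
  apply del_neg in D. auto.
Qed.

Lemma thm_iff_from (b c x y : F) : thm (Impl b c) ->
  (forall v, beval v (Impl b c) = true -> beval v (Iff x y) = true) -> thm (Iff x y).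
Proof. intros H1 H2. revert H1. apply pc1. auto. Qed.

Lemma L_mono ps b c : M (Bul ps) -> box M ps b -> thm (Impl b c) -> box M ps c.
Proof.
  intros Hp [D C] Hbc.
  pose proof (bul_T _ Hp) as Hps.
  assert (Hf : M (Impl (Neg ps) b)). { revert Hps. apply mcs_1; auto. bv. }
  assert (Cc : M (Circ (Impl (Neg ps) c))).
  { apply circ_neg. intro H.
    assert (H' : M (Bul (Impl (Neg (Impl (Neg ps) c)) (Impl (Neg ps) b)))).
    { revert H. apply bul_eq; auto. apply (thm_iff_from b c); auto. bv. }
    pose proof (mcs_ax2 _ HM _ _ _ (A3 (Impl (Neg ps) b) (Neg (Impl (Neg ps) c))) H' Hf).
    apply circ_neg in C; auto. }
  pose proof (L_dual _ _ Hp C) as Hd.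
  split; auto. apply del_neg. intro Hn.
  pose proof (mcs_mp _ HM _ _ (A6 c) Hn) as H6. apply mcs_or in H6; auto.
  apply del_neg in D. destruct H6 as [H6|H6].
  - assert (H7 : M (Bul (And (Impl (Neg ps) c) (Impl ps c)))).
    { revert H6. apply bul_eq; auto. apply A0. bv. }
    apply (mcs_mp _ HM _ _ (A5 _ _)) in H7. apply mcs_or in H7; auto.
    destruct H7 as [H7|H7]. apply circ_neg in Cc; auto.
    assert (H8 : M (Bul (Impl (Neg b) (Impl ps c)))).
    { revert H7. apply bul_eq; auto. apply (thm_iff_from b c); auto. bv. }
    exact (D (mcs_ax2 _ HM _ _ _ (A7 b ps (Impl ps c)) Hd H8)).
  - pose proof (bul_T _ H6) as Hnc.
    assert (N1 : M (Nab (Neg c))). { exact (mcs_iff _ HM _ _ (A2 c) Hn). }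
    assert (N2 : M (Nab (And (Impl (Neg b) (Neg c)) (Neg b)))).
    { revert N1. apply nab_eq; auto. apply (thm_iff_from b c); auto. bv. }
    apply (mcs_mp _ HM _ _ (A4 _ _)) in N2. apply mcs_or in N2; auto. destruct N2 as [N2|N2].
    + apply (mcs_mp _ HM _ _ (A6 _)) in N2. apply mcs_or in N2; auto. destruct N2 as [N2|N2].
      * exact (D (mcs_ax2 _ HM _ _ _ (A7 b ps (Neg c)) Hd N2)).
      * apply bul_T in N2. apply (mcs_negE _ HM c); [exact Hnc|]. revert N2. apply mcs_1; auto. bv.
    + apply D. exact (mcs_iffr _ HM _ _ (A2 b) N2).
Qed.

Lemma L_conj ps b1 b2 : box M ps b1 -> box M ps b2 -> box M ps (And b1 b2).
Proof.
  intros [D1 C1] [D2 C2]. apply del_neg in D1, D2. apply circ_neg in C1, C2. split.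
  - apply del_neg. intro H. apply (mcs_mp _ HM _ _ (A4 _ _)) in H. apply mcs_or in H; tauto.
  - apply circ_neg. intro H.
    assert (H' : M (Bul (And (Impl (Neg ps) b1) (Impl (Neg ps) b2)))).
    { revert H. apply bul_eq; auto. apply A0. bv. }
    apply (mcs_mp _ HM _ _ (A5 _ _)) in H'. apply mcs_or in H'; tauto.
Qed.

Lemma L_thm ps b : thm b -> box M ps b.
Proof.
  intro H. split. apply mcs_thm; auto. apply R1; auto.
  apply mcs_thm; auto. apply R2. revert H. apply pc1. bv.
Qed.

Lemma BB_thm b : thm b -> BB M b.
Proof. intro H. split. intros; apply L_thm; auto. intros; apply mcs_thm; auto. Qed.

Lemma BB_conj b1 b2 : BB M b1 -> BB M b2 -> BB M (And b1 b2).
Proof.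
  intros [H1 H2] [H3 H4]. split. intros; apply L_conj; auto.
  intros; apply mcs_and; auto.
Qed.

Lemma BB_mono b c : BB M b -> thm (Impl b c) -> BB M c.
Proof.
  intros [H1 H2] H. split. intros; eapply L_mono; eauto.
  intros; eapply mcs_mp; eauto.
Qed.

Lemma T1 a : M (Bul a) -> ~ BB M a.
Proof.
  intros H [H1 _]. destruct (H1 a H) as [_ C]. apply circ_neg in C; auto. apply C.
  revert H. apply bul_eq; auto. apply A0. bv.
Qed.

Lemma no_nab a : M (Nab a) -> exists ps, M (Bul ps).
Proof.
  intro H. apply (mcs_mp _ HM _ _ (A6 _)) in H. apply mcs_or in H; auto. destruct H; eauto.
Qed.

Lemma T2 a : M a -> ~ M (Bul a) -> BB M a.
Proof.
  intros H1 H2. split; auto. intros ps Hp. split.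
  - apply del_neg. intro H. apply (mcs_mp _ HM _ _ (A6 _)) in H. apply mcs_or in H; auto.
    destruct H as [H|H]; auto. apply bul_T in H. apply (mcs_negE _ HM a); auto.
  - apply circ_neg. intro H. apply H2. exact (mcs_ax2 _ HM _ _ _ (A3 a (Neg ps)) H H1).
Qed.

Lemma T3 a : M (Nab a) -> ~ BB M a /\ ~ BB M (Neg a).
Proof.
  intro H. destruct (no_nab _ H) as [ps Hp]. split; intros [B _]; destruct (B ps Hp) as [D _];
  apply del_neg in D; apply D; auto.
  exact (mcs_iff _ HM _ _ (A2 a) H).
Qed.

Lemma T4 a : ~ M (Nab a) -> BB M a \/ BB M (Neg a).
Proof.
  intro H. destruct (classic (exists ps, M (Bul ps))) as [[ps Hp]|Hn].
  - assert (Hd : M (Del a)) by (apply del_neg; auto).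
    assert (Hd' : M (Del (Neg a))).
    { apply del_neg. intro H'. apply H. exact (mcs_iffr _ HM _ _ (A2 a) H'). }
    assert (G : M (Circ (Impl (Neg ps) a)) \/ M (Circ (Impl (Neg ps) (Neg a)))).
    { destruct (classic (M (Circ (Impl (Neg ps) a)))); auto. right. apply circ_neg. intro H2.
      assert (H0' : M (Bul (Impl (Neg ps) a))) by (destruct (proj2 HM (Bul (Impl (Neg ps) a))); [auto|contradiction]).
      assert (E1 : M (Bul (Impl (Neg a) ps))). { revert H0'. apply bul_eq; auto. apply A0; bv. }
      assert (E2 : M (Bul (Impl a ps))). { revert H2. apply bul_eq; auto. apply A0; bv. }
      exact (H (mcs_ax2 _ HM _ _ _ (A7 a ps ps) E2 E1)). }
    destruct G as [G|G]; [left|right]; split; try (intro Hn; exfalso; apply (Hn ps); auto);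
      intros ps' Hp'; apply (L_indep ps ps' _ Hp Hp'); split; auto.
  - destruct (proj2 HM a); [left|right]; split; auto; intros ps Hp; exfalso; eauto.
Qed.

Lemma T5 a : BB M a -> BB M (Del a) /\ forall g, BB M (Circ (Impl (Neg g) a)).
Proof.
  intros [B1 B2]. destruct (classic (exists ps, M (Bul ps))) as [[ps0 Hp0]|Hn].
  - split; split; try (intro Hn; exfalso; apply (Hn ps0); auto).
    + intros ps Hp. destruct (B1 ps Hp) as [D C]. split.
      apply (mcs_mp _ HM _ _ (A4_1 _)); auto.
      apply (mcs_mp _ HM _ _ (A4_2 _ _)); auto.
    + intros ps Hp. destruct (B1 ps Hp) as [D C]. split.
      * apply (mcs_mp _ HM _ _ (A4_3 a ps g)). apply mcs_and; auto. split; auto. apply mcs_and; auto.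
      * apply (mcs_mp _ HM _ _ (A4_4 a ps g)). apply mcs_and; auto. split; auto. apply mcs_and; auto.
  - assert (Hb : forall x, ~ M (Bul x)) by (intros x Hx; apply Hn; eauto).
    split; split; try (intros ps Hp; exfalso; apply (Hb ps); auto).
    + intros _. apply del_neg. intro H. destruct (no_nab _ H) as [ps Hp]. apply (Hb ps); auto.
    + intros _. apply circ_neg. auto.
Qed.

End Modal.

Lemma thm_top : thm top.
Proof. apply A0. intro v. unfold top, Impl; cbn. destruct (v (Var p0)); reflexivity. Qed.

Lemma BB_conjl M l : mcs M -> (forall x, In x l -> BB M x) -> BB M (conj l).
Proof.
  intros HM. induction l; intro H. apply BB_thm; auto. apply thm_top.
  change (conj (a :: l)) with (And a (conj l)). apply BB_conj; auto.
  apply H; left; auto. apply IHl. intros; apply H; right; auto.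
Qed.

Lemma existence M c : mcs M -> ~ BB M c ->
  exists T, mcs T /\ (forall x, BB M x -> T x) /\ ~ T c.
Proof.
  intros HM Hc.
  destruct (lindenbaum (fun x => BB M x \/ x = Neg c)) as [T [HT HXT]].
  - intro Hi. apply incons_add in Hi. destruct Hi as [l [Hl Ht]]. apply Hc.
    apply (BB_mono _ HM (conj l)). apply BB_conjl; auto.
    revert Ht. apply pc1. bv.
  - exists T. split; auto. split. intros; apply HXT; auto.
    intro H. apply (mcs_negE _ HT c); auto.
Qed.

Definition CS := { M : F -> Prop | mcs M }.
Definition CR (s t : CS) := forall x, BB (proj1_sig s) x -> proj1_sig t x.
Definition CV (p : P) (s : CS) := proj1_sig s (Var p).

Lemma CR_trans : transitive_rel CR.
Proof.
  intros [s Hs] [t Ht] [u Hu]; unfold CR; cbn. intros H1 H2 x Hx. apply H2.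
  destruct (T5 _ Hs x Hx) as [D C]. split.
  - intros ps _. split; apply H1; auto.
  - intros _. apply H1; auto.
Qed.

Lemma truth f : forall s : CS, sat CR CV s f <-> proj1_sig s f.
Proof.
  induction f; intros [s Hs]; cbn [sat].
  - unfold CV; cbn. tauto.
  - rewrite IHf. cbn. symmetry. apply mcs_neg; auto.
  - rewrite IHf1, IHf2. cbn. symmetry. apply mcs_and; auto.
  - cbn. split.
    + intros [t [u [Rt [Ru [St Su]]]]]. rewrite IHf in St, Su.
      destruct (classic (s (Nab f))) as [H|H]; auto. exfalso.
      destruct (T4 _ Hs _ H) as [B|B].
      * apply Su. apply Ru. auto.
      * apply (mcs_negE _ (proj2_sig t) f); auto.
    + intro H. destruct (T3 _ Hs _ H) as [B1 B2].
      destruct (existence _ _ Hs B1) as [u [Hu [Ru Nu]]].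
      destruct (existence _ _ Hs B2) as [t [Ht [Rt Nt]]].
      exists (exist _ t Ht), (exist _ u Hu). split; [exact Rt|]. split; [exact Ru|].
      rewrite !IHf; cbn. split; auto. destruct (proj2 Ht f); tauto.
  - cbn. rewrite IHf; cbn. split.
    + intros [Hf [t [Rt St]]]. rewrite IHf in St.
      destruct (classic (s (Bul f))) as [H|H]; auto. exfalso.
      apply St. apply Rt. apply T2; auto.
    + intro H. split. apply bul_T; auto.
      destruct (existence _ _ Hs (T1 _ Hs _ H)) as [t [Ht [Rt Nt]]].
      exists (exist _ t Ht). split; [exact Rt|]. rewrite IHf; cbn; auto.
Qed.

Lemma completeness (Gamma : F -> Prop) (phi : F) :
  (forall (S : Type) (R : S -> S -> Prop) (V : P -> S -> Prop),
     transitive_rel R ->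
     forall s : S, (forall psi, Gamma psi -> sat R V s psi) -> sat R V s phi) ->
  derivesK4 Gamma phi.
Proof.
  intro Hsem. destruct (classic (derivesK4 Gamma phi)) as [D|D]; auto. exfalso.
  destruct (lindenbaum (fun x => Gamma x \/ x = Neg phi)) as [M [HM HXM]].
  - intro Hi. apply incons_add in Hi. destruct Hi as [l [Hl Ht]]. apply D. unfold derivesK4.
    destruct l as [|g gs].
    + left. apply (pc2 top (Impl (conj []) (Neg (Neg phi)))); auto using thm_top.
      unfold top. bv.
    + right. exists g, gs. split. apply Hl; left; auto. split. intros; apply Hl; right; auto.
      revert Ht. apply pc1. intro v. unfold Impl; cbn. rewrite beval_conj, beval_foldl. cbn.
      destruct (beval v g), (forallb (beval v) gs), (beval v phi); auto.
  - pose (s := exist (fun M => mcs M) M HM : CS).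
    assert (H := Hsem CS CR CV CR_trans s).
    rewrite truth in H. cbn in H.
    apply (mcs_negE _ HM phi). apply HXM; auto. apply H.
    intros psi Hpsi. rewrite truth. cbn. apply HXM; auto.
Qed.

End K.

Theorem theorem3 (P : Type) (HP : inhabited P)
  (Gamma : form P -> Prop) (phi : form P) :
  (forall (S : Type) (R : S -> S -> Prop) (V : P -> S -> Prop),
     transitive_rel R ->
     forall s : S, (forall psi, Gamma psi -> sat R V s psi) -> sat R V s phi) ->
  derivesK4 Gamma phi.
Proof.
  destruct HP as [p0]. apply (completeness P p0).
Qed.
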